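(* Let $p_1,\ldots,p_m\in\mathbb Z_{>0}$ and $p=\operatorname{lcm}(p_1,\ldots,p_m)$. Let $\Gamma_1,\ldots,\Gamma_m$ be words in affine letters, $e_1,\ldots,e_m\in\mathbb Z_{\ge0}$, $z\in\mathbb C$, $t\in\mathbb Z_{\ge0}$, and $a_\nu,b_\nu,q_\nu\in\mathbb C$ for $1\le\nu\le t$ ($t=0$ allowed). Assume that all affine factors appearing are nonzero at the positive integers at which they are evaluated, after all scale changes (that is, each affine factor $(a,b)$ occurring in a letter of $\Gamma_j$ remains nonzero when its slope is replaced by $a/(p/p_j)$ and it is evaluated at positive integers up to $pk$, and $a_\nu m/p+b_\nu\ne0$ for positive integers $m\le pk$), and fix compatible branches of the powers. Then for every positive integer $k$, \[ S(k)=\sum_{n=1}^{k}z^n\prod_{\nu=1}^{t}(a_\nu n+b_\nu)^{q_\nu}\prod_{j=1}^{m}\mathcal G_{\Gamma_j}(p_jn)^{e_j}\in\operatorname{span}_{\mathbb C}\{\mathcal G_\Delta(pk)\}_\Delta, \] where $\Delta$ ranges over words in affine letters.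
   Context: An affine letter is a triple $L=(\boldsymbol\rho,\sigma,\mathbf A)$ with $\boldsymbol\rho=(\rho_1,\ldots,\rho_t)\in\mathbb C^t$, $\sigma\in\mathbb C$, $\mathbf A=((a_1,b_1),\ldots,(a_t,b_t))$, $a_\nu,b_\nu\in\mathbb C$; its value at a positive integer $n$ is $L(n)=\sigma^n\prod_{\nu=1}^t(a_\nu n+b_\nu)^{-\rho_\nu}$ (branches fixed). For a word $\Gamma=(L_1,\ldots,L_d)$ of affine letters, $\mathcal G_\Gamma(N)=\sum_{N\ge n_1>\cdots>n_d\ge1}\prod_{j=1}^dL_j(n_j)$ and $\mathcal G_\emptyset(N)=1$. *)

(* Defs.v *)
From HB Require Import structures.
From mathcomp Require Import all_boot all_order all_algebra.
From mathcomp Require Import reals complex.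
Set Implicit Arguments. Unset Strict Implicit. Unset Printing Implicit Defensive.
Import Order.TTheory GRing.Theory Num.Theory.
Local Open Scope ring_scope.

Section AffineLetters.
Variable R : realType.
Local Notation C := (R[i]).

(* An affine factor (rho, (a, b)) contributes (a n + b)^(-rho).
   An affine letter L = (rho, sigma, A) is encoded as its sigma together with
   the list of its t affine factors (rho_nu, (a_nu, b_nu)). *)
Definition letter : eqType := (C * seq (C * (C * C)))%type.
Definition lsig (L : letter) : C := L.1.
Definition lfac (L : letter) : seq (C * (C * C)) := L.2.

Definition word : eqType := seq letter.

(* pw x s  stands for the (fixed choice of branch of the) power  x^s. *)
Definition letter_val (pw : C -> C -> C) (L : letter) (n : nat) : C :=
  lsig L ^+ n * \prod_(f <- lfac L) pw (f.2.1 * n%:R + f.2.2) (- f.1).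

(* G_Gamma(N) = sum_{N >= n_1 > ... > n_d >= 1} prod_j L_j(n_j),  G_[::](N) = 1 *)
Fixpoint Gw (pw : C -> C -> C) (w : word) (N : nat) : C :=
  match w with
  | [::] => 1
  | L :: w' => \sum_(1 <= n < N.+1) letter_val pw L n * Gw pw w' n.-1
  end.

End AffineLetters.

(* Main.v *)
Require Import Defs.
From HB Require Import structures.
From mathcomp Require Import all_boot all_order all_algebra.
From mathcomp Require Import all_solvable all_field.
From mathcomp Require Import reals complex.
From mathcomp Require Import ring zify.
Import Order.TTheory GRing.Theory Num.Theory.
Local Open Scope ring_scope.
Set Warnings "-notation-overridden -ambiguous-paths".
Set Implicit Arguments. Unset Strict Implicit.

Section Proof.
Variable R : realType.
Variable pw : R[i] -> R[i] -> R[i].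
Local Notation C := (R[i]).

Lemma prim_exists (n : nat) : (0 < n)%N -> exists z : C, n.-primitive_root z.
Proof.
move=> n_gt0.
pose p : {poly C} := 'X^n - 1; have [r Dp] := closed_field_poly_normal p.
rewrite (monicP _) ?monicXnsubC // scale1r in Dp.
have rn1: all n.-unity_root r by apply/allP=> z; rewrite -root_prod_XsubC -Dp.
have sz_r: (n < (size r).+1)%N.
  by rewrite -(size_prod_XsubC r id) -Dp size_XnsubC.
have [|z] := hasP (has_prim_root n_gt0 rn1 _ sz_r); last by exists z.
by rewrite -separable_prod_XsubC -Dp separable_Xn_sub_1 // pnatr_eq0 -lt0n.
Qed.

Lemma filter_sum (d : nat) (w : C) : d.-primitive_root w -> forall n : nat,
  ((d %| n)%N)%:R = d%:R^-1 * \sum_(r < d) (w ^+ r) ^+ n.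
Proof.
move=> pw_ n; have d_gt0 := prim_order_gt0 pw_.
have dn0 : d%:R != 0 :> C by rewrite pnatr_eq0 -lt0n.
case: (boolP (d %| n)%N) => dn.
  have wn1 : w ^+ n = 1 by apply/eqP; rewrite -(prim_order_dvd pw_).
  under eq_bigr => r _ do rewrite -exprM mulnC exprM wn1 expr1n.
  by rewrite sumr_const card_ord mulr1n mulVf.
have : (w ^+ n - 1) * \sum_(r < d) (w ^+ r) ^+ n = 0.
  under eq_bigr => r _ do rewrite -exprM mulnC exprM.
  by rewrite -subrX1 -exprM mulnC exprM (prim_expr_order pw_) expr1n subrr.
move/eqP; rewrite mulf_eq0 subr_eq0 -(prim_order_dvd pw_) (negbTE dn) /= => /eqP ->.
by rewrite mulr0.
Qed.

Definition GS (cs : seq (C * word R)) (N : nat) : C :=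
  \sum_(c <- cs) c.1 * Gw pw c.2 N.
Definition repr (g : nat -> C) := exists cs, forall N, g N = GS cs N.

Lemma repr_ext f g : (forall N, f N = g N) -> repr f -> repr g.
Proof. by move=> e [cs H]; exists cs => N; rewrite -e. Qed.

Lemma repr_word w : repr (Gw pw w).
Proof. by exists [:: (1, w)] => N; rewrite /GS big_seq1 mul1r. Qed.

Lemma repr1 : repr (fun _ => 1).
Proof. exact: (repr_word [::]). Qed.

Lemma repr0 : repr (fun _ => 0).
Proof. by exists [::] => N; rewrite /GS big_nil. Qed.

Lemma reprD f g : repr f -> repr g -> repr (fun N => f N + g N).
Proof.
by move=> [c1 H1] [c2 H2]; exists (c1 ++ c2) => N; rewrite /GS big_cat H1 H2.
Qed.

Lemma reprZ (a : C) f : repr f -> repr (fun N => a * f N).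
Proof.
move=> [cs H]; exists [seq (a * c.1, c.2) | c <- cs] => N.
by rewrite /GS big_map H /GS mulr_sumr; apply: eq_bigr => c _; rewrite mulrA.
Qed.

Lemma repr_sum (I : Type) (s : seq I) (F : I -> nat -> C) :
  (forall i, repr (F i)) -> repr (fun N => \sum_(i <- s) F i N).
Proof.
move=> H; elim: s => [|x s IH].
  by apply: repr_ext repr0 => N; rewrite big_nil.
by apply: (repr_ext _ (reprD (H x) IH)) => N; rewrite big_cons.
Qed.

Lemma repr_prepend (L : letter R) g : repr g ->
  repr (fun N => \sum_(1 <= n < N.+1) letter_val pw L n * g n.-1).
Proof.
move=> [cs H]; exists [seq (c.1, L :: c.2) | c <- cs] => N.
rewrite /GS big_map /=.
under eq_bigr => n _ do rewrite H /GS mulr_sumr.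
rewrite exchange_big /=; apply: eq_bigr => c _.
by rewrite mulr_sumr; apply: eq_bigr => n _; rewrite mulrCA.
Qed.

Definition lmul (L M : letter R) : letter R := (lsig L * lsig M, lfac L ++ lfac M).

Lemma lmulE L M n : letter_val pw (lmul L M) n = letter_val pw L n * letter_val pw M n.
Proof. by rewrite /letter_val /lmul /lsig /lfac /= big_cat exprMn mulrACA. Qed.

Lemma Gw_step (w : word R) N : Gw pw w N.+1 = Gw pw w N +
  (if w is L :: w' then letter_val pw L N.+1 * Gw pw w' N else 0).
Proof.
case: w => [|L w] /=; first by rewrite addr0.
by rewrite big_nat_recr.
Qed.

Lemma Gw0 (w : word R) : Gw pw w 0 = if w is [::] then 1 else 0.
Proof. by case: w => [|L w] //=; rewrite big_geq. Qed.

Lemma repr_self_word (L : letter R) (w : word R) :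
  repr (fun N => \sum_(1 <= n < N.+1) letter_val pw L n * Gw pw w n).
Proof.
case: w => [|M w].
  by apply: repr_ext (repr_word [:: L]) => N /=.
apply: repr_ext (reprD (repr_word (L :: M :: w)) (repr_word (lmul L M :: w))) => N /=.
rewrite -big_split /=; apply: eq_big_nat => n /andP [n1 _].
rewrite (big_nat_recr n) //= prednK // lmulE mulrDr mulrA.
by [].

Qed.

Lemma repr_self (L : letter R) g : repr g ->
  repr (fun N => \sum_(1 <= n < N.+1) letter_val pw L n * g n).
Proof.
move=> [cs H].
have Hs := @repr_sum _ cs (fun c N => c.1 * \sum_(1 <= n < N.+1) letter_val pw L n * Gw pw c.2 n)
  (fun c => reprZ c.1 (@repr_self_word L c.2)).
apply: (repr_ext _ Hs) => N /=.
under [RHS]eq_bigr => n _ do rewrite H /GS mulr_sumr.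
rewrite exchange_big /=; apply: eq_bigr => c _.
by rewrite mulr_sumr; apply: eq_bigr => n _; rewrite mulrCA.
Qed.


Lemma Gw_prod_eq L u M v N : Gw pw (L :: u) N * Gw pw (M :: v) N =
  \sum_(1 <= n < N.+1) (letter_val pw L n * (Gw pw u n.-1 * Gw pw (M :: v) n.-1)
     + letter_val pw M n * (Gw pw (L :: u) n.-1 * Gw pw v n.-1)
     + letter_val pw (lmul L M) n * (Gw pw u n.-1 * Gw pw v n.-1)).
Proof.
elim: N => [|N IH]; first by rewrite !Gw0 mul0r big_geq.
rewrite !Gw_step big_nat_recr // -IH lmulE.
change (N.+1.-1) with N.
move: (Gw pw (L :: u) N) (Gw pw (M :: v) N) => A B.
rewrite /=; ring.
Qed.

Lemma repr_Gprod n : forall w1 w2 : word R, (size w1 + size w2 <= n)%N ->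
  repr (fun N => Gw pw w1 N * Gw pw w2 N).
Proof.
elim: n => [|n IH] [|L u] [|M v] //= hs.
- by apply: (repr_ext _ repr1) => N; rewrite mul1r.
- by apply: (repr_ext _ repr1) => N; rewrite mul1r.
- by apply: (repr_ext _ (repr_word (M :: v))) => N; rewrite mul1r.
- by apply: (repr_ext _ (repr_word (L :: u))) => N /=; rewrite mulr1.
have h1 := repr_prepend L (IH u (M :: v) ltac:(rewrite /=; lia)).
have h2 := repr_prepend M (IH (L :: u) v ltac:(rewrite /=; lia)).
have h3' : (size u + size v <= n)%N.
  move: hs; rewrite !addnS !addSn !ltnS; apply: leq_trans; exact: leqnSn.
have h3 := repr_prepend (lmul L M) (IH u v h3').
apply: (repr_ext _ (reprD (reprD h1 h2) h3)) => N.
by rewrite (Gw_prod_eq L u M v N) !big_split.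
Qed.

Lemma reprM f g : repr f -> repr g -> repr (fun N => f N * g N).
Proof.
move=> [c1 H1] [c2 H2].
have Hs := @repr_sum _ c1 (fun c N => \sum_(d <- c2) (c.1 * d.1) * (Gw pw c.2 N * Gw pw d.2 N))
  (fun c => @repr_sum _ c2 _ (fun d => reprZ (c.1 * d.1) (@repr_Gprod _ c.2 d.2 (leqnn _)))).
apply: (repr_ext _ Hs) => N /=.
rewrite H1 H2 /GS mulr_suml; apply: eq_bigr => c _.
rewrite mulr_sumr; apply: eq_bigr => d _; ring.
Qed.

Lemma reprX f e : repr f -> repr (fun N => f N ^+ e).
Proof.
move=> Hf; elim: e => [|e IH]; first exact: (repr_ext _ repr1).
by apply: (repr_ext _ (reprM Hf IH)) => N; rewrite exprS.
Qed.

Lemma repr_prod (I : Type) (s : seq I) (F : I -> nat -> C) :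
  (forall i, repr (F i)) -> repr (fun N => \prod_(i <- s) F i N).
Proof.
move=> H; elim: s => [|x s IH].
  by apply: (repr_ext _ repr1) => N; rewrite big_nil.
by apply: (repr_ext _ (reprM (H x) IH)) => N; rewrite big_cons.
Qed.


Definition lconst (c : C) : letter R := (c, [::]).
Lemma lconstE c n : letter_val pw (lconst c) n = c ^+ n.
Proof. by rewrite /letter_val /lsig /lfac /= big_nil mulr1. Qed.

Definition lscale (d : nat) (L : letter R) : letter R :=
  (d.-root (lsig L), [seq (f.1, (f.2.1 / d%:R, f.2.2)) | f <- lfac L]).

Lemma lscaleE d L n : (0 < d)%N ->
  letter_val pw (lscale d L) (d * n)%N = letter_val pw L n.
Proof.
move=> d0; rewrite /letter_val /lscale /lsig /lfac /= big_map exprM rootCK //.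
congr (_ * _); apply: eq_bigr => f _ /=.
have dn0 : d%:R != 0 :> C by rewrite pnatr_eq0 -lt0n.
by rewrite natrM mulrA divfK.
Qed.

Lemma sum_dvd d (F : nat -> C) N : (0 < d)%N ->
  \sum_(1 <= n < N.+1) ((d %| n)%N)%:R * F n = \sum_(1 <= n < (N %/ d).+1) F (d * n)%N.
Proof.
move=> d0; elim: N => [|N IH]; first by rewrite div0n !big_geq.
rewrite big_nat_recr // IH divnS //.
case: (boolP (d %| N.+1)%N) => dn /=.
  rewrite mulr1n mul1r add1n (big_nat_recr (N %/ d).+1) //=; congr (_ + F _).
  have e : ((N.+1) %/ d = (N %/ d).+1)%N by rewrite divnS // dn.
  by rewrite -e mulnC divnK.
by rewrite add0n -[RHS]addr0; congr (_ + _); apply: mul0r.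
Qed.

Lemma filter_rw d (w : C) (L : letter R) n (X : C) : d.-primitive_root w ->
  ((d %| n)%N)%:R * (letter_val pw L n * X) =
  d%:R^-1 * \sum_(r < d) letter_val pw (lmul (lconst (w ^+ r)) L) n * X.
Proof.
move=> pw_; rewrite (filter_sum pw_ n) -mulrA; congr (_ * _).
rewrite mulr_suml; apply: eq_bigr => r _.
by rewrite lmulE lconstE mulrA.
Qed.

Lemma repr_filter_prepend d (w : C) (L : letter R) (g : nat -> C) : d.-primitive_root w -> repr g ->
  repr (fun N => \sum_(1 <= n < N.+1) ((d %| n)%N)%:R * (letter_val pw L n * g n.-1)).
Proof.
move=> pw_ Hg.
have Hs := reprZ (d%:R^-1) (@repr_sum _ (index_enum 'I_d)
  (fun r N => \sum_(1 <= n < N.+1) letter_val pw (lmul (lconst (w ^+ r)) L) n * g n.-1)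
  (fun r => repr_prepend _ Hg)).
apply: (repr_ext _ Hs) => N /=.
rewrite exchange_big mulr_sumr; apply: eq_bigr => n _.
by rewrite (filter_rw _ _ _ pw_).
Qed.

Lemma repr_filter_self d (w : C) (L : letter R) (g : nat -> C) : d.-primitive_root w -> repr g ->
  repr (fun N => \sum_(1 <= n < N.+1) ((d %| n)%N)%:R * (letter_val pw L n * g n)).
Proof.
move=> pw_ Hg.
have Hs := reprZ (d%:R^-1) (@repr_sum _ (index_enum 'I_d)
  (fun r N => \sum_(1 <= n < N.+1) letter_val pw (lmul (lconst (w ^+ r)) L) n * g n)
  (fun r => repr_self _ Hg)).
apply: (repr_ext _ Hs) => N /=.
rewrite exchange_big mulr_sumr; apply: eq_bigr => n _.
by rewrite (filter_rw _ _ _ pw_).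
Qed.

Lemma pred_div d n : (0 < d)%N -> (0 < n)%N -> ((d * n).-1 %/ d = n.-1)%N.
Proof.
move=> d0; case: n => [|k] // _.
have -> : ((d * k.+1).-1 = k * d + d.-1)%N by rewrite mulnS -(prednK d0) addSn /= addnC mulnC.
by rewrite divnMDl // divn_small ?addn0 // prednK.
Qed.

Lemma repr_div d (w : word R) : (0 < d)%N -> repr (fun N => Gw pw w (N %/ d)).
Proof.
move=> d0; have [om om_] := prim_exists d0.
elim: w => [|L w IH]; first exact: (repr_ext _ repr1).
have H := repr_filter_prepend (lscale d L) om_ IH.
apply: (repr_ext _ H) => N /=.
rewrite sum_dvd //; apply: eq_big_nat => n /andP [n1 _].
by rewrite lscaleE // pred_div.
Qed.

End Proof.

Theorem theorem6p2 (R : realType) (pw : R[i] -> R[i] -> R[i])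
  (m : nat) (ps : 'I_m -> nat) (Gam : 'I_m -> word R) (e : 'I_m -> nat)
  (z : R[i]) (t : nat) (a b q : 'I_t -> R[i]) :
  (forall j, (0 < ps j)%N) ->
  let p := \big[lcmn/1%N]_(j < m) ps j in
  let S := fun k : nat =>
    \sum_(1 <= n < k.+1)
      z ^+ n * (\prod_(nu < t) pw (a nu * n%:R + b nu) (q nu))
        * \prod_(j < m) Gw pw (Gam j) (ps j * n) ^+ e j in
  exists cs : seq (R[i] * word R),
    forall k : nat, (0 < k)%N ->
      (forall j : 'I_m, forall L, L \in Gam j -> forall f, f \in lfac L ->
         forall i : nat, (0 < i <= p * k)%N ->
           f.2.1 / (p %/ ps j)%:R * i%:R + f.2.2 != 0) ->
      (forall nu : 'I_t, forall i : nat, (0 < i <= p * k)%N ->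
         a nu * i%:R / p%:R + b nu != 0) ->
      S k = \sum_(c <- cs) c.1 * Gw pw c.2 (p * k).
Proof.
move=> hps p S.
have p0 : (0 < p)%N.
  rewrite /p; elim/big_ind: _ => // x y hx hy; by rewrite lcmn_gt0 hx hy.
have dv : forall j, (ps j %| p)%N.
  by move=> j; rewrite /p (biglcmn_sup j).
have dpos : forall j, (0 < p %/ ps j)%N.
  by move=> j; rewrite divn_gt0 // dvdn_leq.
have [om om_] := prim_exists R p0.
pose lam : letter R := (p.-root z,
   [seq (- q nu, (a nu / p%:R, b nu)) | nu <- index_enum 'I_t]).
have HU := @repr_prod R pw _ (index_enum 'I_m)
  (fun j N => Gw pw (Gam j) (N %/ (p %/ ps j)) ^+ e j)
  (fun j => reprX (e j) (repr_div pw (Gam j) (dpos j))).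
have [cs Hcs] := repr_filter_self lam om_ HU.
exists cs => k k0 _ _.
transitivity (GS pw cs (p * k)%N); last by [].
rewrite -Hcs sum_dvd // mulKn //.
rewrite /S; apply: eq_big_nat => n _.
congr (_ * _).
  rewrite /letter_val /lam /lsig /lfac /= exprM rootCK //; congr (_ * _).
  rewrite big_map; apply: eq_bigr => nu _ /=.
  have pn0 : p%:R != 0 :> R[i] by rewrite pnatr_eq0 -lt0n.
  by rewrite opprK natrM mulrA divfK.
apply: eq_bigr => j _.
have -> : ((p * n) %/ (p %/ ps j) = ps j * n)%N.
  by rewrite -{1}(divnK (dv j)) -mulnA mulKn.
by [].
Qed.
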